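(* Let $\mathbf M$ be an $(N+1,k)$-admissible and micro-reversible matrix, written in canonical form with transient states $0,\dots,N-k$ and characteristic triple $(\mu,\widetilde{\mathbf w},\widetilde{\mathbf z})$, and let $\phi:\mathbb R^+\to\mathbb R$ be convex. For a probability vector $\mathbf p\in\mathbb R^{N+1}$ with transient part $\widetilde{\mathbf p}=(p_i)_{i=0,\dots,N-k}$ define $$G_\phi(\mathbf p|\overline{\boldsymbol\pi}):=\begin{cases}\sum_{i=0}^{N-k}\phi\Big(\frac{\widetilde p_i}{\widetilde z_i\langle\widetilde{\mathbf w},\widetilde{\mathbf p}\rangle}\Big)\widetilde w_i\widetilde z_i&\text{if }\langle\widetilde{\mathbf w},\widetilde{\mathbf p}\rangle\neq0,\\ +\infty&\text{otherwise.}\end{cases}$$ Then there is $h_0>0$ depending only on $\mathbf M$ such that for every $h\in(0,h_0)$ and every probability vector $\mathbf p$, with $\mathbf M^{(h)}:=\mathbf I+h(\mathbf M-\mathbf I)$, $$G_\phi(\mathbf M^{(h)}\mathbf p|\overline{\boldsymbol\pi})\le G_\phi(\mathbf p|\overline{\boldsymbol\pi}).$$ Furthermore, if $\phi(x)\ge x-1$ for all $x\ge0$, then $G_\phi(\mathbf p|\overline{\boldsymbol\pi})\ge0$ for every probability vector $\mathbf p$.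
   Context: Column-stochastic matrices. For $1\le k<N-1$, an $(N+1)\times(N+1)$ column-stochastic $\mathbf M$ is $(N+1,k)$-admissible if, after a simultaneous permutation of rows and columns, $\mathbf M=\begin{pmatrix}\widetilde{\mathbf M}&\mathbf 0\\ \mathbf A&\mathbf I\end{pmatrix}$ with $\mathbf I$ the $k\times k$ identity, $\widetilde{\mathbf M}$ irreducible of size $N+1-k$ (the core, indexed by the transient states $0,\dots,N-k$; the last $k$ states are absorbing) and $\mathbf A$ with no zero row. The characteristic triple is $\mu=\rho(\widetilde{\mathbf M})\in(0,1)$ together with the positive left/right eigenvectors $\widetilde{\mathbf w},\widetilde{\mathbf z}$ of the core for $\mu$, normalised by $\langle\widetilde{\mathbf w},\mathbf 1\rangle=\langle\widetilde{\mathbf w},\widetilde{\mathbf z}\rangle=1$. $\mathbf M$ is micro-reversible if $\widetilde w_i\widetilde M_{ij}\widetilde z_j=\widetilde w_j\widetilde M_{ji}\widetilde z_i$ for all $i,j$. The notation $\overline{\boldsymbol\pi}$ refers to the reference measure $(\widetilde{\mathbf w}\circ\widetilde{\mathbf z},\mathbf 0)$ extended by zeros on the absorbing states. *)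

(* Defs.v *)
From HB Require Import structures.
From mathcomp Require Import all_boot all_order all_algebra.
From mathcomp Require Import reals constructive_ereal.
From mathcomp Require Import complex.

Set Implicit Arguments.
Unset Strict Implicit.
Unset Printing Implicit Defensive.

Import Order.TTheory GRing.Theory Num.Theory.
Local Open Scope ring_scope.

Section Defs.
Variable R : realType.

Definition column_stochastic (n : nat) (M : 'M[R]_n) : Prop :=
  (forall i j, 0 <= M i j) /\ (forall j, \sum_i M i j = 1).

Definition irreducible_mx (n : nat) (A : 'M[R]_n) : Prop :=
  (forall i j, 0 <= A i j) /\ (forall i j, exists m : nat, 0 < (A ^+ m) i j).

Definition is_complex_eigenvalue (n : nat) (A : 'M[R]_n) (lam : R[i]) : Prop :=
  exists2 v : 'cV[R[i]]_n, v != 0 & map_mx (fun x => (x%:C)%C) A *m v = lam *: v.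

Definition is_spectral_radius (n : nat) (A : 'M[R]_n) (mu : R) : Prop :=
  (exists2 lam, is_complex_eigenvalue A lam & `|lam| = (mu%:C)%C) /\
  (forall lam, is_complex_eigenvalue A lam -> `|lam| <= (mu%:C)%C).

(* canonical form: the transient states are the indices < N.+1 - k,
   the absorbing ones the indices >= N.+1 - k *)
Definition tr_ord (N k : nat) (i : 'I_(N.+1 - k)) : 'I_N.+1 :=
  widen_ord (leq_subr k N.+1) i.

Definition core (N k : nat) (M : 'M[R]_N.+1) : 'M[R]_(N.+1 - k) :=
  \matrix_(i, j) M (tr_ord i) (tr_ord j).

Definition transient_part (N k : nat) (p : 'cV[R]_N.+1) : 'cV[R]_(N.+1 - k) :=
  \col_i p (tr_ord i) 0.

Definition admissible_canonical (N k : nat) (M : 'M[R]_N.+1) : Prop :=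
  [/\ (1 <= k)%N /\ (k < N - 1)%N,
      column_stochastic M /\ irreducible_mx (core k M),
      (forall i j : 'I_N.+1, (i < N.+1 - k)%N -> (N.+1 - k <= j)%N -> M i j = 0),
      (forall i j : 'I_N.+1, (N.+1 - k <= i)%N -> (N.+1 - k <= j)%N ->
          M i j = (i == j)%:R) &
      (forall i : 'I_N.+1, (N.+1 - k <= i)%N ->
          exists2 j : 'I_N.+1, (j < N.+1 - k)%N & M i j != 0)].

Definition characteristic_triple (N k : nat) (M : 'M[R]_N.+1) (mu : R)
  (w z : 'cV[R]_(N.+1 - k)) : Prop :=
  [/\ is_spectral_radius (core k M) mu,
      (forall i, 0 < w i 0) /\ (forall i, 0 < z i 0),
      (w^T *m core k M = mu *: w^T), (core k M *m z = mu *: z) &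
      \sum_i w i 0 = 1 /\ \sum_i w i 0 * z i 0 = 1].

Definition micro_reversible (N k : nat) (M : 'M[R]_N.+1)
  (w z : 'cV[R]_(N.+1 - k)) : Prop :=
  forall i j, w i 0 * core k M i j * z j 0 = w j 0 * core k M j i * z i 0.

Definition probability_vector (n : nat) (p : 'cV[R]_n) : Prop :=
  (forall i, 0 <= p i 0) /\ \sum_i p i 0 = 1.

Definition convex_on_nonneg (phi : R -> R) : Prop :=
  forall x y t : R, 0 <= x -> 0 <= y -> 0 <= t <= 1 ->
    phi (t * x + (1 - t) * y) <= t * phi x + (1 - t) * phi y.

Definition Mh (n : nat) (M : 'M[R]_n) (h : R) : 'M[R]_n :=
  1%:M + h *: (M - 1%:M).

Definition G_phi (N k : nat) (phi : R -> R) (w z : 'cV[R]_(N.+1 - k))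
  (p : 'cV[R]_N.+1) : \bar R :=
  let pt := transient_part k p in
  let s := \sum_i w i 0 * pt i 0 in
  if s != 0 then
    (\sum_i phi (pt i 0 / (z i 0 * s)) * w i 0 * z i 0)%:E
  else +oo%E.

End Defs.

Arguments characteristic_triple {R N} k M mu w z.
Arguments micro_reversible {R N} k M w z.
Arguments G_phi {R N} k phi w z p.
Arguments core {R N} k M.
Arguments transient_part {R N} k p.

(* Main.v *)
Set Warnings "-notation-overridden,-ambiguous-paths".
Require Import Defs.
From HB Require Import structures.
From mathcomp Require Import all_boot all_order all_algebra.
From mathcomp Require Import reals constructive_ereal.
From mathcomp Require Import complex.
From mathcomp Require Import ring lra.
Import Order.TTheory GRing.Theory Num.Theory.
Local Open Scope ring_scope.

Lemma jensen_seq (R : realType) (phi : R -> R) (I : eqType) (r : seq I)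
  (a x : I -> R) :
  convex_on_nonneg phi -> (forall i, 0 <= a i) -> (forall i, 0 <= x i) ->
  0 < \sum_(i <- r) a i ->
  (\sum_(i <- r) a i) * phi ((\sum_(i <- r) a i * x i) / \sum_(i <- r) a i)
  <= \sum_(i <- r) a i * phi (x i).
Proof.
move=> Hc Ha Hx; elim: r => [|j r IH]; first by rewrite big_nil ltxx.
rewrite !big_cons => Hpos.
set S' := \sum_(i <- r) a i in IH Hpos *.
set Y := \sum_(i <- r) a i * x i in IH *.
set Z := \sum_(i <- r) a i * phi (x i) in IH *.
have S'ge0 : 0 <= S' by apply: sumr_ge0.
case: (eqVneq S' 0) => [S'0|S'n0].
  have H0 : forall i, i \in r -> a i = 0.
    move: S'0 => /eqP; rewrite /S' psumr_eq0 // => /allP H i /H.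
    by move=> /eqP.
  have -> : Y = 0 by apply: big1_seq => i /= /H0 ->; rewrite mul0r.
  have -> : Z = 0 by apply: big1_seq => i /= /H0 ->; rewrite mul0r.
  rewrite S'0 !addr0 in Hpos *.
  have aj0 : a j != 0 by rewrite gt_eqF.
  by have -> : a j * x j / a j = x j by field.
have S'pos : 0 < S' by rewrite lt_def S'n0.
have Yge0 : 0 <= Y by apply: sumr_ge0 => i _; apply: mulr_ge0.
set S := a j + S' in Hpos *.
have Sn0 : S != 0 by rewrite gt_eqF.
have ht01 : 0 <= a j / S <= 1.
  apply/andP; split; first by rewrite divr_ge0 // ltW.
  by rewrite ler_pdivrMr // mul1r /S lerDl.
have key := Hc (x j) (Y / S') (a j / S) (Hx j) (divr_ge0 Yge0 S'ge0) ht01.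
have E1 : a j / S * x j + (1 - a j / S) * (Y / S') = (a j * x j + Y) / S.
  by rewrite /S; field; rewrite -/S Sn0 S'n0.
rewrite E1 in key.
apply: le_trans (_ : _ <= a j * phi (x j) + S' * phi (Y / S')) _; last by rewrite lerD2l; apply: IH.
have E2 : S * (a j / S * phi (x j) + (1 - a j / S) * phi (Y / S')) = a j * phi (x j) + S' * phi (Y / S').
  by rewrite /S; field; rewrite -/S Sn0.
by rewrite -E2 ler_pM2l.
Qed.

Lemma sum_delta (R : pzRingType) n (i : 'I_n) (F : 'I_n -> R) :
  \sum_j (i == j)%:R * F j = F i.
Proof.
rewrite (bigD1 i) //= eqxx mul1r big1 ?addr0 // => j.
by rewrite eq_sym => /negbTE ->; rewrite mul0r.
Qed.

Lemma sum_delta' (R : pzRingType) n (j : 'I_n) (F : 'I_n -> R) :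
  \sum_i (i == j)%:R * F i = F j.
Proof.
rewrite (bigD1 j) //= eqxx mul1r big1 ?addr0 // => i.
by move=> /negbTE ->; rewrite mul0r.
Qed.

Lemma tp_Mh (R : realType) (N k : nat) (M : 'M[R]_N.+1) (h : R) (p : 'cV[R]_N.+1) :
  (forall i j : 'I_N.+1, (i < N.+1 - k)%N -> (N.+1 - k <= j)%N -> M i j = 0) ->
  forall i, transient_part k (Mh M h *m p) i 0 =
    (1 - h) * transient_part k p i 0 + h * \sum_j core k M i j * transient_part k p j 0.
Proof.
move=> HUR i; rewrite !mxE.
rewrite (eq_bigr (fun j => (1-h) * ((tr_ord i == j)%:R * p j 0) + h * (M (tr_ord i) j * p j 0))); last first.
  by move=> j _; rewrite !mxE; case: eqP => _; rewrite /= ?mulr1n ?mulr0n; ring.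
rewrite big_split /= -!mulr_sumr sum_delta; congr (_ + _ * _).
rewrite (bigID (fun j : 'I_N.+1 => (j < N.+1 - k)%N)) /= [X in _ + X]big1 ?addr0; last first.
  by move=> j; rewrite -leqNgt => Hj; rewrite HUR ?mul0r //= ltn_ord.
rewrite (big_ord_narrow (leq_subr k N.+1)).
by apply: eq_bigr => j _; rewrite !mxE.
Qed.

From mathcomp Require Import zify.

Theorem proposition1 (R : realType) (N k : nat) (M : 'M[R]_N.+1) (mu : R)
  (w z : 'cV[R]_(N.+1 - k)) :
  admissible_canonical k M ->
  characteristic_triple k M mu w z ->
  micro_reversible k M w z ->
  (exists2 h0 : R, 0 < h0 &
     forall (phi : R -> R), convex_on_nonneg phi ->
     forall (h : R), 0 < h < h0 ->
     forall (p : 'cV[R]_N.+1), probability_vector p ->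
       (G_phi k phi w z (Mh M h *m p) <= G_phi k phi w z p)%E) /\
  (forall (phi : R -> R), convex_on_nonneg phi ->
     (forall x : R, 0 <= x -> x - 1 <= phi x) ->
     forall (p : 'cV[R]_N.+1), probability_vector p ->
       (0 <= G_phi k phi w z p)%E).
Proof.
move=> [[k1 kN] [[HMge0 _] _] HUR _ _] [_ [Hw Hz] HwC HCz [Hsw Hswz]] _.
have wC : forall j, \sum_i w i 0 * core k M i j = mu * w j 0.
  by move=> j; have := congr1 (fun A : 'M[R]_(1, N.+1 - k) => A 0 j) HwC; rewrite !mxE => <-;
     apply: eq_bigr => i _; rewrite !mxE.
have Cz : forall i, \sum_j core k M i j * z j 0 = mu * z i 0.
  by move=> i; have := congr1 (fun A : 'M[R]_(N.+1 - k, 1) => A i 0) HCz; rewrite !mxE.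
have Cge0 : forall i j, 0 <= core k M i j by move=> i j; rewrite mxE.
have n0 : (0 < N.+1 - k)%N by lia.
have mu0 : 0 <= mu.
  have := wC (Ordinal n0); rewrite -(pmulr_lge0 _ (Hw (Ordinal n0))) => <-.
  by apply: sumr_ge0 => i _; apply: mulr_ge0; [apply: ltW|].
have ptge0 : forall p : 'cV[R]_N.+1, probability_vector p ->
    forall i, 0 <= transient_part k p i 0.
  by move=> p [Hp _] i; rewrite mxE.
have sge0 : forall p : 'cV[R]_N.+1, probability_vector p ->
    0 <= \sum_i w i 0 * transient_part k p i 0.
  by move=> p Hp; apply: sumr_ge0 => i _; apply: mulr_ge0; [apply: ltW|apply: ptge0].
split.
exists 1 => // phi Hc h /andP[h0 h1] p Hp.
rewrite /G_phi /=.
set pt := transient_part k p.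
set pt' := transient_part k (Mh M h *m p).
set s := \sum_i w i 0 * pt i 0.
set s' := \sum_i w i 0 * pt' i 0.
case: (eqVneq s 0) => [_|sn0] /=; first by rewrite leey.
have spos : 0 < s by rewrite lt_def sn0 sge0.
have Hpt' : forall i, pt' i 0 = (1 - h) * pt i 0 + h * \sum_j core k M i j * pt j 0.
  by move=> i; rewrite /pt' tp_Mh.
set lam := 1 - h + h * mu.
have lampos : 0 < lam.
  by have := mulr_ge0 (ltW h0) mu0; rewrite /lam; lra.
have lam0 : lam != 0 by rewrite gt_eqF.
have Hs' : s' = lam * s.
  rewrite /s' (eq_bigr (fun i => (1 - h) * (w i 0 * pt i 0) +
        h * \sum_j (w i 0 * core k M i j * pt j 0))); last first.
    move=> i _; rewrite Hpt' mulrDr; congr (_ + _); first by ring.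
    by rewrite mulrCA; congr (_ * _); rewrite mulr_sumr; apply: eq_bigr => j _; ring.
  rewrite big_split /= -!mulr_sumr -/s exchange_big /=.
  rewrite (eq_bigr (fun j => mu * (w j 0 * pt j 0))); last first.
    by move=> j _; rewrite -mulr_suml wC mulrA.
  by rewrite -mulr_sumr -/s /lam; ring.
have s'n0 : s' != 0 by rewrite Hs' mulf_neq0.
rewrite s'n0 lee_fin.
set x := fun j => pt j 0 / (z j 0 * s).
have xge0 : forall j, 0 <= x j.
  move=> j; apply: divr_ge0; first exact: ptge0.
  by apply: mulr_ge0; apply: ltW.
set K := fun i j => (1 - h) / lam * (i == j)%:R + h / (z i 0 * lam) * (core k M i j * z j 0).
have Kge0 : forall i j, 0 <= K i j.
  move=> i j; apply: addr_ge0; apply: mulr_ge0.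
  - by apply: divr_ge0; [rewrite subr_ge0 ltW | apply: ltW].
  - by case: eqP.
  - by apply: divr_ge0; [apply: ltW | apply: mulr_ge0; apply: ltW].
  - by apply: mulr_ge0; [apply: Cge0 | apply: ltW].
have Ka : forall i, \sum_j K i j = 1.
  move=> i; rewrite big_split /= -!mulr_sumr Cz.
  rewrite (eq_bigr (fun j => (i == j)%:R * 1)); last by move=> j _; rewrite mulr1.
  rewrite sum_delta; have zn0 : z i 0 != 0 by rewrite gt_eqF.
  by rewrite /lam; field; rewrite zn0 -/lam lam0.
have Kb : forall i, \sum_j K i j * x j = pt' i 0 / (z i 0 * s').
  move=> i; rewrite (eq_bigr (fun j => (1 - h) / lam * ((i == j)%:R * x j) +
       h / (z i 0 * lam) * (core k M i j * pt j 0 / s))); last first.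
    move=> j _; rewrite /K /x mulrDl -!mulrA; congr (_ + _ * _).
    have zn0 : z j 0 != 0 by rewrite gt_eqF.
    by congr (_ * (_ * _)); field; rewrite zn0 sn0.
  rewrite big_split /= -!mulr_sumr sum_delta -mulr_suml Hs' Hpt' /x.
  have zn0 : z i 0 != 0 by rewrite gt_eqF.
  by field; rewrite zn0 sn0 lam0.
have Kc : forall j, \sum_i w i 0 * z i 0 * K i j = w j 0 * z j 0.
  move=> j; rewrite (eq_bigr (fun i => (1 - h) / lam * ((i == j)%:R * (w i 0 * z i 0)) +
       h / lam * z j 0 * (w i 0 * core k M i j))); last first.
    move=> i _; rewrite /K mulrDr; congr (_ + _); first by ring.
    have zn0 : z i 0 != 0 by rewrite gt_eqF.
    by field; rewrite zn0 lam0.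
  rewrite big_split /= -!mulr_sumr sum_delta' wC.
  by rewrite /lam; field; rewrite -/lam lam0.
have J : forall i, phi (pt' i 0 / (z i 0 * s')) <= \sum_j K i j * phi (x j).
  move=> i; have := @jensen_seq _ phi _ (index_enum 'I_(N.+1 - k)) (K i) x Hc (Kge0 i) xge0.
  by rewrite Ka ltr01 mul1r divr1 Kb; apply.
apply: le_trans (_ : _ <= \sum_i w i 0 * z i 0 * \sum_j K i j * phi (x j)) _.
  apply: ler_sum => i _; rewrite -mulrA mulrC ler_pM2l ?J //.
  by apply: mulr_gt0.
rewrite (eq_bigr (fun i => \sum_j (w i 0 * z i 0 * K i j) * phi (x j))); last first.
  by move=> i _; rewrite mulr_sumr; apply: eq_bigr => j _; rewrite mulrA.
rewrite exchange_big /=; apply: ler_sum => j _.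
by rewrite -mulr_suml Kc /x mulrC mulrA.
move=> phi _ Hphi p Hp; rewrite /G_phi /=.
set pt := transient_part k p.
set s := \sum_i w i 0 * pt i 0.
case: (eqVneq s 0) => [_|sn0] /=; first by rewrite le0y.
have spos : 0 < s by rewrite lt_def sn0 sge0.
rewrite lee_fin.
apply: le_trans (_ : \sum_i (pt i 0 / (z i 0 * s) - 1) * w i 0 * z i 0 <= _); last first.
  apply: ler_sum => i _; rewrite -!mulrA ler_wpM2r //.
    by apply: mulr_ge0; apply: ltW.
  apply: Hphi; apply: divr_ge0; first exact: ptge0.
  by apply: mulr_ge0; apply: ltW.
rewrite (eq_bigr (fun i => w i 0 * pt i 0 / s - w i 0 * z i 0)); last first.
  move=> i _; have zn0 : z i 0 != 0 by rewrite gt_eqF.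
  by field; rewrite zn0 sn0.
by rewrite sumrB -mulr_suml -/s divff // Hswz subrr.
Qed.
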